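(* Let $N\ge1$, $(T_N)_{jk}=\binom{j+k}{j}$, $(\Psi_N)_{jk}=\binom{j}{k}$ for $0\le j,k<N$, and $\Lambda_N=\mathrm{diag}(1,-1,\dots,(-1)^{N-1})$. If $\vec v$ is an eigenvector of $T_N$ with eigenvalue $\lambda$, then $\Psi_N\Lambda_N\vec v$ is an eigenvector of $T_N$ with eigenvalue $\lambda^{-1}$.
   Context: Matrix indices start at $0$. ($T_N=\Psi_N\Psi_N^\intercal$ is positive definite, so $\lambda\neq0$.) *)

(* Defs.v *)
From mathcomp Require Import all_boot all_order all_algebra.
Set Implicit Arguments. Unset Strict Implicit. Unset Printing Implicit Defensive.
Import GRing.Theory Num.Theory.
Local Open Scope ring_scope.

Definition Tmx (R : numFieldType) (N : nat) : 'M[R]_N :=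
  \matrix_(j < N, k < N) ('C(j + k, j))%:R.
Definition Psimx (R : numFieldType) (N : nat) : 'M[R]_N :=
  \matrix_(j < N, k < N) ('C(j, k))%:R.
Definition Lambdamx (R : numFieldType) (N : nat) : 'M[R]_N :=
  \matrix_(j < N, k < N) (if j == k then (-1) ^+ j else 0).

Definition is_eigenvector (R : numFieldType) (N : nat) (A : 'M[R]_N)
  (v : 'cV[R]_N) (lam : R) : Prop := v != 0 /\ A *m v = lam *: v.

(* Main.v *)
Require Import Defs.
From mathcomp Require Import all_boot all_order all_algebra.
From mathcomp Require Import ring.
Import GRing.Theory Num.Theory.

Lemma vand_sq (a b n : nat) : a < n ->
  \sum_(k < n) 'C(a, k) * 'C(b, k) = 'C(a + b, a).
Proof.
move=> han; rewrite -(subnKC han) big_split_ord /=.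
rewrite [X in _ + X]big1 ?addn0; last first.
  by move=> i _; rewrite bin_small ?mul0n //= ltnS leq_addr.
rewrite -binomial.Vandermonde [RHS](reindex_inj rev_ord_inj) /=.
apply: eq_bigr => i _; rewrite subSS.
have hi : i <= a by rewrite -ltnS.
by rewrite bin_sub // subKn.
Qed.
Local Open Scope ring_scope.

Lemma alt_sum (R : comNzRingType) (i : nat) : forall n, (i < n)%N -> forall j : nat,
  \sum_(k < n) (-1) ^+ k * ('C(i, k))%:R * ('C(k, j))%:R = (-1) ^+ j * (i == j)%:R :> R.
Proof.
elim: i => [|i IH] [|n] // hn j.
  rewrite big_ord_recl big1 ?addr0; last first.
    by move=> k _; rewrite bin0n /= mulr0 mul0r.
  by rewrite /= expr0 !mul1r bin0n; case: j => [|j]; rewrite ?expr0 ?mul1r ?mulr0.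
have hn' : (i < n)%N by [].
have hn1 : (i < n.+1)%N by apply: ltnW.
rewrite big_ord_recl /=.
under eq_bigr => k _ do rewrite /bump /= add1n binS natrD mulrDr mulrDl exprS mulN1r.
rewrite big_split /= addrA.
have -> : (-1) ^+ 0 * ('C(i.+1, 0))%:R * ('C(0, j))%:R +
   \sum_(k < n) (- (-1) ^+ k * ('C(i, k.+1))%:R * ('C(k.+1, j))%:R) =
   \sum_(k < n.+1) (-1) ^+ k * ('C(i, k))%:R * ('C(k, j))%:R :> R.
  rewrite big_ord_recl /= !bin0; congr (_ + _); apply: eq_bigr => k _.
  by rewrite /bump /= add1n exprS mulN1r.
rewrite IH //.
case: j => [|j].
  under eq_bigr => k _ do rewrite bin0 -(bin0 k) !mulNr.
  rewrite sumrN IH // expr0 !mul1r subrr.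
  by [].
under eq_bigr => k _ do rewrite binS natrD mulrDr !mulNr.
rewrite big_split /= !sumrN !IH // addrA subrr add0r eqSS exprS mulN1r mulNr.
by [].
Qed.

Section M.
Variables (R : realFieldType) (N : nat).
Local Notation T := (Tmx R N).
Local Notation Ps := (Psimx R N).
Local Notation L := (Lambdamx R N).

Lemma PL_E i k : (Ps *m L) i k = ('C(i, k))%:R * (-1) ^+ k.
Proof.
rewrite !mxE (bigD1 k) //= big1 ?addr0; first by rewrite !mxE eqxx.
by move=> l /negbTE hl; rewrite !mxE hl mulr0.
Qed.

Lemma PLPL : (Ps *m L) *m (Ps *m L) = 1%:M.
Proof.
apply/matrixP => i j; rewrite !mxE.
transitivity (\sum_(k < N) ((-1) ^+ k * ('C(i, k))%:R * ('C(k, j))%:R) * (-1) ^+ j :> R).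
  by apply: eq_bigr => k _; rewrite !PL_E; ring.
rewrite -big_distrl /= (@alt_sum R i N (ltn_ord i)) mulrAC -expr2 -exprM mulnC exprM sqrrN !expr1n mul1r.
by [].
Qed.

Lemma T_E : T = Ps *m Ps^T.
Proof.
apply/matrixP => i j; rewrite !mxE.
under eq_bigr => k _ do rewrite !mxE -natrM.
by rewrite -natr_sum vand_sq.
Qed.

Lemma L_tr : L^T = L.
Proof. by apply/matrixP => i j; rewrite !mxE eq_sym; case: eqP => // ->. Qed.

Lemma LL : L *m L = 1%:M.
Proof.
apply/matrixP => i j; rewrite !mxE (bigD1 i) //= big1 ?addr0.
  rewrite !mxE eqxx; case: eqP => [->|_]; last by rewrite mulr0.
  by rewrite -expr2 -exprM mulnC exprM sqrrN !expr1n.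
by move=> l /negbTE hl; rewrite !mxE eq_sym hl mul0r.
Qed.

Lemma key : (Ps *m L) *m T *m (Ps *m L) *m T = 1%:M.
Proof.
have h1 : Ps *m L *m Ps = L.
  have -> : Ps *m L *m Ps = (Ps *m L) *m (Ps *m L) *m L.
    by rewrite -!mulmxA LL mulmx1.
  by rewrite PLPL mul1mx.
have -> : (Ps *m L) *m T *m (Ps *m L) *m T
    = (Ps *m L *m Ps) *m Ps^T *m (Ps *m L *m Ps) *m Ps^T.
  by rewrite T_E !mulmxA.
rewrite h1.
have -> : L *m Ps^T *m L *m Ps^T = (Ps *m L *m (Ps *m L))^T.
  by rewrite !trmx_mul L_tr !mulmxA.
by rewrite PLPL trmx1.
Qed.
End M.


Theorem mainTheorem11 (R : realFieldType) (N : nat) (hN : (1 <= N)%N)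
  (v : 'cV[R]_N) (lam : R) :
  is_eigenvector (Tmx R N) v lam ->
  is_eigenvector (Tmx R N) (Psimx R N *m Lambdamx R N *m v) lam^-1.
Proof.
move=> [vn0 hv].
set P := Psimx R N *m Lambdamx R N.
have PP : P *m P = 1%:M by exact: PLPL.
have K := key R N; rewrite -/P in K.
clearbody P.
have hPv : P *m (P *m v) = v by rewrite mulmxA PP mul1mx.
have h2 : lam *: (Tmx R N *m (P *m v)) = P *m v.
  have h : P *m Tmx R N *m P *m Tmx R N *m v = v by rewrite K mul1mx.
  rewrite -mulmxA hv -scalemxAr in h.
  have := congr1 (mulmx P) h; rewrite -scalemxAr !mulmxA.
  by rewrite PP mul1mx -mulmxA.
have lam0 : lam != 0.
  apply/eqP => l0; move: h2; rewrite l0 scale0r => /esym h0.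
  by move: vn0; rewrite -hPv h0 mulmx0 eqxx.
split.
  apply/eqP => h0; move: vn0; rewrite -hPv h0 mulmx0 eqxx //.
by rewrite -{2}h2 scalerA mulVf // scale1r.
Qed.
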